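(* Let $a$ be a positive integer and let $P_a = \{C_{i,a+1} : 1 \le i \le 2a+1\} \cup \{C_{a+1,j} : 1 \le j \le 2a+1\}$ be the plus polyomino, of size $n = 4a+1$. Then on the $n \times n$ board, $\mathrm{cp}(P_a) = 1$, where $\mathrm{cp}(P_a)$ denotes the common value $\mathrm{cp}_{\mathrm{fixed}}(P_a) = \mathrm{cp}_{\mathrm{free}}(P_a)$.
   Context: For integers $i,j$, $C_{i,j}$ denotes the unit square cell in column $i$ and row $j$ of the integer grid (columns numbered left to right, rows numbered top to bottom). A polyomino is a finite set of cells; its size is its number of cells. For a polyomino $\mathcal{P}$ of size $n$ the board is $\mathbb{B} = \{C_{i,j} : 1 \le i,j \le n\}$. The shift of $\mathcal{P}$ by integers $(c,d)$ is $\mathcal{P}+(c,d) = \{C_{x+c,y+d} : C_{x,y} \in \mathcal{P}\}$. A fixed copy of $\mathcal{P}$ is any shift of $\mathcal{P}$; a free copy is any shift of a rotation of $\mathcal{P}$ by a multiple of $90^\circ$ (for $P_a$, every rotation equals $P_a$, so fixed and free copies coincide). A set of polyominoes is a valid arrangement if each is contained in $\mathbb{B}$ and they are pairwise disjoint. A fixed (resp. free) packing of $\mathcal{P}$ is a set of fixed (resp. free) copies of $\mathcal{P}$ forming a valid arrangement such that adding any further fixed (resp. free) copy yields an invalid arrangement. The clumsy fixed (resp. free) packing number $\mathrm{cp}_{\mathrm{fixed}}(\mathcal{P})$ (resp. $\mathrm{cp}_{\mathrm{free}}(\mathcal{P})$) is the minimum number of polyominoes in such a packing on the $n\times n$ board.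 *)

(* Defs.v *)
From HB Require Import structures.
From mathcomp Require Import all_boot all_order all_algebra.
From mathcomp Require Import finmap.
Set Implicit Arguments. Unset Strict Implicit. Unset Printing Implicit Defensive.
Import Order.TTheory GRing.Theory Num.Theory.
Local Open Scope ring_scope.
Local Open Scope fset_scope.

(* A cell C_{i,j} is represented by the pair (i, j) : column i, row j. *)
Definition cell := (int * int)%type.
Definition polyomino := {fset cell}.

Definition shift (P : polyomino) (d : cell) : polyomino :=
  [fset ((x.1 + d.1)%R, (x.2 + d.2)%R) | x in P].

Definition rot90 (P : polyomino) : polyomino :=
  [fset ((- x.2)%R, x.1) | x in P].

Definition fixed_copy (P Q : polyomino) : Prop :=
  exists d : cell, Q = shift P d.

Definition free_copy (P Q : polyomino) : Prop :=
  exists (k : nat) (d : cell), (k < 4)%N /\ Q = shift (iter k rot90 P) d.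

Definition in_board (n : nat) (c : cell) : bool :=
  (1 <= c.1 <= n%:Z) && (1 <= c.2 <= n%:Z).

(* A (finite set, given as a duplicate-free list of) polyominoes is a valid
   arrangement: each contained in the board, pairwise disjoint. *)
Definition valid_arrangement (n : nat) (L : seq polyomino) : Prop :=
  uniq L /\
  (forall Q, Q \in L -> forall c, c \in Q -> in_board n c) /\
  (forall Q1 Q2, Q1 \in L -> Q2 \in L -> Q1 != Q2 -> [disjoint Q1 & Q2]).

Definition is_packing (copy : polyomino -> polyomino -> Prop)
    (P : polyomino) (n : nat) (L : seq polyomino) : Prop :=
  (forall Q, Q \in L -> copy P Q) /\
  valid_arrangement n L /\
  (forall Q, copy P Q -> Q \notin L -> ~ valid_arrangement n (Q :: L)).

Definition is_clumsy_packing_number (copy : polyomino -> polyomino -> Prop)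
    (P : polyomino) (k : nat) : Prop :=
  let n := #|` P| in
  (exists L, is_packing copy P n L /\ size L = k) /\
  (forall L, is_packing copy P n L -> (k <= size L)%N).

Definition plus_polyomino (a : nat) : polyomino :=
  [fset ((i.+1)%:Z, (a.+1)%:Z) | i in iota 0 (2 * a + 1)]
  `|` [fset ((a.+1)%:Z, (j.+1)%:Z) | j in iota 0 (2 * a + 1)].

(* Main.v *)
Require Import Defs.
From HB Require Import structures.
From mathcomp Require Import all_boot all_order all_algebra.
From mathcomp Require Import finmap zify.
Import Order.TTheory GRing.Theory Num.Theory.
Local Open Scope ring_scope.
Local Open Scope fset_scope.

Definition armA (a : nat) : polyomino :=
  [fset ((i.+1)%:Z, (a.+1)%:Z) | i in iota 0 (2 * a + 1)].
Definition armB (a : nat) : polyomino :=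
  [fset ((a.+1)%:Z, (j.+1)%:Z) | j in iota 0 (2 * a + 1)].

Lemma iotaH (a : nat) (z : int) :
  (exists2 i, i \in iota 0 (2 * a + 1) & z = (i.+1)%:Z)
   <-> (1 <= z <= (2 * a + 1)%:Z).
Proof.
split.
  by move=> [i]; rewrite mem_iota => hi ->; apply/andP; split; lia.
move=> /andP [h1 h2]; exists (`|z - 1|%N); rewrite ?mem_iota; lia.
Qed.

Lemma memA (a : nat) (c : cell) :
  (c \in armA a) = ((c.2 == (a.+1)%:Z) && (1 <= c.1 <= (2 * a + 1)%:Z)).
Proof.
case: c => x y /=.
apply/imfsetP/andP => /=.
  by move=> [i hi [-> ->]]; split => //; apply/iotaH; exists i.
by move=> [/eqP -> /iotaH [i hi ->]]; exists i.
Qed.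

Lemma memB (a : nat) (c : cell) :
  (c \in armB a) = ((c.1 == (a.+1)%:Z) && (1 <= c.2 <= (2 * a + 1)%:Z)).
Proof.
case: c => x y /=.
apply/imfsetP/andP => /=.
  by move=> [i hi [-> ->]]; split => //; apply/iotaH; exists i.
by move=> [/eqP -> /iotaH [i hi ->]]; exists i.
Qed.

Lemma mem_plus (a : nat) (c : cell) :
  (c \in plus_polyomino a) =
  ((c.2 == (a.+1)%:Z) && (1 <= c.1 <= (2 * a + 1)%:Z)) ||
  ((c.1 == (a.+1)%:Z) && (1 <= c.2 <= (2 * a + 1)%:Z)).
Proof. by rewrite in_fsetU -memA -memB. Qed.

Lemma mem_shift (P : polyomino) d c :
  (c \in shift P d) = ((c.1 - d.1, c.2 - d.2) \in P).
Proof.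
apply/imfsetP/idP => /=.
  by move=> [x hx ->] /=; rewrite !addrK; case: x hx.
move=> h; exists (c.1 - d.1, c.2 - d.2) => //=; rewrite !subrK; by case: c h.
Qed.

Lemma mem_rot (P : polyomino) c :
  (c \in rot90 P) = ((c.2, - c.1) \in P).
Proof.
apply/imfsetP/idP => /=.
  by move=> [x hx ->] /=; rewrite opprK; case: x hx.
move=> h; exists (c.2, - c.1) => //=; rewrite opprK; by case: c h.
Qed.

Lemma card_plus (a : nat) : #|` plus_polyomino a| = (4 * a + 1)%N.
Proof.
have cA : #|` armA a| = (2 * a + 1)%N.
  rewrite card_imfset; last by move=> i j [] h; lia.
  by rewrite /= undup_id ?iota_uniq // size_iota.
have cB : #|` armB a| = (2 * a + 1)%N.
  rewrite card_imfset; last by move=> i j [] h; lia.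
  by rewrite /= undup_id ?iota_uniq // size_iota.
have cI : armA a `&` armB a = [fset ((a.+1)%:Z, (a.+1)%:Z)].
  apply/fsetP => c; rewrite in_fsetI memA memB in_fset1.
  case: c => x y /=; rewrite xpair_eqE; lia.
have := cardfsUI (armA a) (armB a).
rewrite cI cardfs1 cA cB /plus_polyomino -/(armA a) -/(armB a).
lia.
Qed.

Lemma rot_shift (a : nat) d :
  rot90 (shift (plus_polyomino a) d) =
  shift (plus_polyomino a) (- (2 * a + 2)%:Z - d.2, d.1).
Proof.
apply/fsetP => c; rewrite mem_rot !mem_shift !mem_plus /=.
case: c => x y /=; case: d => d1 d2 /=; lia.
Qed.

Lemma iter_rot (a : nat) k :
  exists d, iter k rot90 (plus_polyomino a) = shift (plus_polyomino a) d.
Proof.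
elim: k => [|k [d IH]].
  exists (0, 0); apply/fsetP => c; rewrite mem_shift /=.
  by case: c => x y /=; rewrite !subr0.
by exists (- (2 * a + 2)%:Z - d.2, d.1); rewrite /= IH rot_shift.
Qed.

Lemma shift_shift (P : polyomino) d e :
  shift (shift P d) e = shift P ((d.1 + e.1)%R, (d.2 + e.2)%R).
Proof.
apply/fsetP => c; rewrite !mem_shift /=.
by rewrite [(d.1 + _)%R]addrC [(d.2 + _)%R]addrC !opprD !addrA.
Qed.

Section Main.
Variable (a : nat).
Hypothesis ha : (0 < a)%N.
Let P := plus_polyomino a.
Let P0 := shift P (a%:Z, a%:Z).

Lemma P0_board c : c \in P0 -> in_board (4 * a + 1) c.
Proof.
rewrite /P0 /P mem_shift mem_plus /in_board.
case: c => x y /=; lia.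
Qed.

Lemma main_gen (copy : polyomino -> polyomino -> Prop) :
  (forall Q, copy P Q -> exists d, Q = shift P d) ->
  copy P P0 ->
  is_clumsy_packing_number copy P 1.
Proof.
move=> hcopy hP0; rewrite /is_clumsy_packing_number /P card_plus -/P.
have vP0 : valid_arrangement (4 * a + 1) [:: P0].
  split=> //; split.
    by move=> Q; rewrite inE => /eqP -> c; apply: P0_board.
  by move=> Q1 Q2; rewrite !inE => /eqP -> /eqP ->; rewrite eqxx.
split.
  exists [:: P0]; split => //; split.
    by move=> Q; rewrite inE => /eqP ->.
  split => // Q /hcopy [[d1 d2] ->]; rewrite inE => hne [_ [hb hd]].
  have hin : forall c, c \in shift P (d1, d2) -> in_board (4 * a + 1) c.
    by apply: hb; rewrite inE eqxx.
  have h1 : in_board (4 * a + 1) ((d1 + 1)%R, (d2 + (a.+1)%:Z)%R).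
    by apply: hin; rewrite mem_shift mem_plus /=; lia.
  have h2 : in_board (4 * a + 1) ((d1 + (2 * a + 1)%:Z)%R, (d2 + (a.+1)%:Z)%R).
    by apply: hin; rewrite mem_shift mem_plus /=; lia.
  have h3 : in_board (4 * a + 1) ((d1 + (a.+1)%:Z)%R, (d2 + 1)%R).
    by apply: hin; rewrite mem_shift mem_plus /=; lia.
  have h4 : in_board (4 * a + 1) ((d1 + (a.+1)%:Z)%R, (d2 + (2 * a + 1)%:Z)%R).
    by apply: hin; rewrite mem_shift mem_plus /=; lia.
  rewrite /in_board /= in h1 h2 h3 h4.
  have /fdisjointP hdis := hd _ _ (mem_head _ _) (mem_last _ [:: P0]) hne.
  have := hdis ((2 * a + 1)%:Z, (d2 + (a.+1)%:Z)%R).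
  rewrite /P0 !mem_shift !mem_plus /=.
  lia.
move=> L [_ [_ hmax]]; case: L hmax => // hmax.
by exfalso; apply: (hmax P0 hP0).
Qed.
End Main.

Theorem theorem10 (a : nat) (ha : (0 < a)%N) :
  #|` plus_polyomino a| = (4 * a + 1)%N /\
  is_clumsy_packing_number fixed_copy (plus_polyomino a) 1 /\
  is_clumsy_packing_number free_copy (plus_polyomino a) 1.
Proof.
split; first exact: card_plus.
split; [apply: (@main_gen a ha fixed_copy) | apply: (@main_gen a ha free_copy)].
- by move=> Q [d ->]; exists d.
- by exists (a%:Z, a%:Z).
- by move=> Q [k [d [_ ->]]]; have [d' ->] := iter_rot a k; rewrite shift_shift; eexists.
- by exists 0%N, (a%:Z, a%:Z).
Qed.
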